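(* Let $E$ be a normed space over $\mathbb{K}\in\{\mathbb{R},\mathbb{C}\}$ and let $P:E\to\mathbb{K}$ be a polynomial on $E$ (not assumed continuous), i.e. $P=P_0+P_1+\cdots+P_n$ for some $n\in\mathbb{N}$, where $P_0$ is a constant function and each $P_k$ ($1\le k\le n$) is a $k$-homogeneous polynomial. Then $P$ is continuous if and only if $P(K)$ is compact for every compact set $K\subset E$.
   Context: A map $Q:E\to\mathbb{K}$ is a $k$-homogeneous polynomial if there is a symmetric $k$-linear mapping $L:E^k\to\mathbb{K}$ (not necessarily continuous) with $Q(x)=L(x,\ldots,x)$ for all $x\in E$. *)

(* Defs.v *)
From HB Require Import structures.
From mathcomp Require Import all_boot all_order all_algebra all_fingroup.
From mathcomp Require Import all_classical all_reals all_analysis.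
From mathcomp Require Export complex.
Set Implicit Arguments. Unset Strict Implicit. Unset Printing Implicit Defensive.
Import Order.TTheory GRing.Theory Num.Theory.
Import numFieldNormedType.Exports.
Local Open Scope ring_scope.
Local Open Scope classical_set_scope.

Definition upd_arg (E : Type) (k : nat) (v : 'I_k -> E) (i : 'I_k) (x : E) : 'I_k -> E :=
  fun j => if j == i then x else v j.

Definition multilinear (K : numFieldType) (E : lmodType K) (k : nat)
  (L : ('I_k -> E) -> K) : Prop :=
  forall (v : 'I_k -> E) (i : 'I_k) (a : K) (x y : E),
    L (upd_arg v i (a *: x + y)) = a * L (upd_arg v i x) + L (upd_arg v i y).

Definition symmetric_map (K : Type) (E : Type) (k : nat)
  (L : ('I_k -> E) -> K) : Prop :=
  forall (s : 'S_k) (v : 'I_k -> E), L (fun j => v (s j)) = L v.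

Definition homogeneous_poly (K : numFieldType) (E : lmodType K) (k : nat)
  (Q : E -> K) : Prop :=
  exists L : ('I_k -> E) -> K,
    [/\ multilinear L, symmetric_map L & forall x, Q x = L (fun _ => x)].

Definition is_polynomial (K : numFieldType) (E : lmodType K) (P : E -> K) : Prop :=
  exists (n : nat) (c : K) (Q : nat -> E -> K),
    (forall k, (1 <= k <= n)%N -> homogeneous_poly k (Q k)) /\
    (forall x, P x = c + \sum_(1 <= k < n.+1) Q k x).

Definition poly_cont_iff_compact_images (K : numFieldType) : Prop :=
  forall (E : normedModType K) (P : E -> K),
    is_polynomial P ->
    (continuous P <-> (forall A : set E, compact A -> compact (P @` A))).

(* Main.v *)
Require Import Defs.
From HB Require Import structures.
From mathcomp Require Import all_boot all_order all_algebra all_fingroup.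
From mathcomp Require Import all_classical all_reals all_analysis.
From mathcomp Require Import complex.
Set Implicit Arguments. Unset Strict Implicit. Unset Printing Implicit Defensive.
Import Order.TTheory GRing.Theory Num.Theory.
Import numFieldNormedType.Exports.
Local Open Scope ring_scope.
Local Open Scope classical_set_scope.
Section Lines.
Variables (K : numFieldType) (E : lmodType K).

Definition poly_line (d : nat) (g : K -> K) :=
  exists p : {poly K}, (size p <= d.+1)%N /\ forall t, g t = p.[t].

Lemma poly_line_add d g1 g2 : poly_line d g1 -> poly_line d g2 ->
  poly_line d (fun t => g1 t + g2 t).
Proof.
move=> [p1 [s1 e1]] [p2 [s2 e2]]; exists (p1 + p2); split.
  by apply: leq_trans (size_polyD _ _) _; rewrite geq_max s1 s2.
by move=> t; rewrite hornerD e1 e2.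
Qed.

Lemma poly_line_mulX d g : poly_line d g -> poly_line d.+1 (fun t => t * g t).
Proof.
move=> [p [s e]]; exists (p * 'X); split.
  apply: leq_trans (size_polyMleq _ _) _; rewrite size_polyX addn2 /=.
  by [].
by move=> t; rewrite hornerMX e mulrC.
Qed.

Lemma poly_line_cst d c : poly_line d (fun _ => c).
Proof.
exists c%:P; split; first by apply: leq_trans (size_polyC_leq1 _) _.
by move=> t; rewrite hornerC.
Qed.

Lemma poly_line_le d d' g : (d <= d')%N -> poly_line d g -> poly_line d' g.
Proof. by move=> le [p [s e]]; exists p; split => //; apply: leq_trans s _. Qed.

Lemma multilinear_line (k : nat) (L : ('I_k -> E) -> K) (a h : E) :
  multilinear L -> poly_line k (fun t => L (fun _ => a + t *: h)).
Proof.
move=> ML.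
suff H : forall m, (m <= k)%N -> forall u : 'I_k -> E,
    poly_line m (fun t => L (fun j => if (j < m)%N then a + t *: h else u j)).
  have [p [s e]] := H k (leqnn k) (fun _ => a).
  exists p; split => // t; rewrite -e; congr L; apply/funext => j.
  by rewrite ltn_ord.
elim=> [|m IH] mk u.
  have -> : (fun t => L (fun j : 'I_k => if (j < 0)%N then a + t *: h else u j)) = fun _ => L u.
    by apply/funext => t; congr L; apply/funext => j.
  exact: poly_line_cst.
pose i : 'I_k := Ordinal mk.
have IH' := IH (ltnW mk).
have E1 : forall t, (fun j : 'I_k => if (j < m.+1)%N then a + t *: h else u j)
   = upd_arg (fun j : 'I_k => if (j < m)%N then a + t *: h else u j) i (t *: h + a).
  move=> t; apply/funext => j; rewrite /upd_arg ltnS leq_eqVlt.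
  case: (eqVneq j i) => [->|ne]; first by rewrite /= eqxx /= addrC.
  have -> : (nat_of_ord j == m) = false.
    by apply: contraNF ne => /eqP e; apply/eqP/val_inj.
  by [].
have E2 : forall (t : K) (x : E), upd_arg (fun j : 'I_k => if (j < m)%N then a + t *: h else u j) i x
   = (fun j : 'I_k => if (j < m)%N then a + t *: h else upd_arg u i x j).
  move=> t x; apply/funext => j; rewrite /upd_arg.
  case: (eqVneq j i) => [->|//]; by rewrite /= ltnn.
have -> : (fun t => L (fun j : 'I_k => if (j < m.+1)%N then a + t *: h else u j))
  = (fun t => t * L (fun j : 'I_k => if (j < m)%N then a + t *: h else upd_arg u i h j)
      + L (fun j : 'I_k => if (j < m)%N then a + t *: h else upd_arg u i a j)).
  by apply/funext => t; rewrite E1 ML !E2.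
apply: poly_line_add; first exact/poly_line_mulX/IH'.
exact/(poly_line_le (leqnSn m))/IH'.
Qed.

Lemma polynomial_line (P : E -> K) : is_polynomial P ->
  exists n, forall a h, poly_line n (fun t => P (a + t *: h)).
Proof.
move=> [n [c [Q [HQ HP]]]]; exists n => a h.
have -> : (fun t => P (a + t *: h)) =
  (fun t => c + \sum_(1 <= k < n.+1) Q k (a + t *: h)).
  by apply/funext => t; rewrite HP.
apply: poly_line_add; first exact: poly_line_cst.
suff H : forall N, (N <= n.+1)%N ->
   poly_line n (fun t => \sum_(1 <= k < N) Q k (a + t *: h)) by exact: H.
elim=> [|N IH] hN.
  by apply: (@poly_line_le 0) => //; exists 0; split; [by rewrite size_poly0 | move=> t; rewrite big_geq // horner0].
case: N IH hN => [|N] IH hN.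
  have -> : (fun t => \sum_(1 <= k < 1) Q k (a + t *: h)) = fun _ => 0.
    by apply/funext => t; rewrite big_geq.
  exact: poly_line_cst.
have -> : (fun t => \sum_(1 <= k < N.+2) Q k (a + t *: h)) =
   (fun t => \sum_(1 <= k < N.+1) Q k (a + t *: h) + Q N.+1 (a + t *: h)).
  by apply/funext => t; rewrite big_nat_recr.
apply: poly_line_add; first exact/IH/ltnW.
have [L [ML _ QL]] := HQ N.+1 hN.
have hN' : (N.+1 <= n)%N by [].
have [p [s e]] := poly_line_le hN' (multilinear_line a h ML).
by exists p; split => // t; rewrite QL e.
Qed.

End Lines.
Section Lag.
Variable K : numFieldType.

Lemma cvg_cstK (x c : K) : (fun _ : K => c) @ x --> c.
Proof. exact: (@cvg_cst _ c _ (nbhs x) _). Qed.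

Lemma horner_cont (p : {poly K}) (x : K) : (fun y => p.[y]) @ x --> p.[x].
Proof.
elim/poly_ind: p => [|p c IH].
  have -> : (fun y => (0 : {poly K}).[y]) = (fun _ => 0).
    by apply/funext => y; rewrite horner0.
  rewrite horner0; exact: cvg_cstK.
have H := cvgD (cvgM IH (@cvg_id _ (nbhs x))) (@cvg_cstK x c).
have E1 : (fun y => (p * 'X + c%:P).[y]) = (fun y => p.[y] * y + c).
  by apply/funext => y; rewrite !hornerE.
rewrite E1. rewrite !hornerE. exact: H.
Qed.

Lemma natr_injK : injective (fun k : nat => (k%:R : K)).
Proof. by move=> a b /eqP; rewrite eqr_nat => /eqP. Qed.

Lemma interp (n : nat) : exists ls : 'I_n.+1 -> {poly K},
  forall p : {poly K}, (size p <= n.+1)%N -> forall t,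
    p.[t] = \sum_(i < n.+1) p.[i%:R] * (ls i).[t].
Proof.
exists (fun i => tnth (lagrange n.+1 (fun k : nat => (k%:R : K))) i) => p sp t.
rewrite {1}(lagrange_gen (ltn0Sn n) natr_injK sp) horner_sum.
by apply: eq_bigr => i _; rewrite hornerM hornerC.
Qed.
End Lag.
Section B.
Variable K : numFieldType.

Lemma cvg_sumK (T : Type) (F : set_system T) (FF : Filter F) (I : Type) (s : seq I)
  (f : I -> T -> K) (l : I -> K) :
  (forall i, f i @ F --> l i) ->
  (fun x => \sum_(i <- s) f i x) @ F --> \sum_(i <- s) l i.
Proof.
move=> H; elim: s => [|i s IH].
  have -> : (fun x => \sum_(i <- [::]) f i x) = (fun _ => 0).
    by apply/funext => x; rewrite big_nil.
  rewrite big_nil; exact: cvg_cst.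
have -> : (fun x => \sum_(j <- i :: s) f j x) = (fun x => f i x + \sum_(j <- s) f j x).
  by apply/funext => x; rewrite big_cons.
rewrite big_cons; exact: cvgD.
Qed.

Variable E : normedModType K.

Lemma bounded_cont (P : E -> K) (n : nat) (a : E) (r M : K) :
  (forall a h, poly_line n (fun t => P (a + t *: h))) ->
  0 < r -> (forall y, ball a r y -> `|P y| <= M) ->
  P y @[y --> a] --> P a.
Proof.
move=> Hline r0 HM.
have [ls Hls] := interp K n.
pose om t := \sum_(i < n.+1) `|(ls i).[t] - (ls i).[0]|.
pose rho := r / (n.+2)%:R.
have rho0 : 0 < rho by rewrite divr_gt0.
pose g y := `|y - a| / rho.
have M0 : 0 <= M by apply: le_trans (HM a (ballxx a r0)).
have om0 t : 0 <= om t by apply: sumr_ge0 => i _.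
have claim y : `|P y - P a| <= M * om (g y).
  have [->|ya] := eqVneq y a.
    rewrite subrr normr0; exact: mulr_ge0.
  pose t := g y.
  have t0 : 0 < t by rewrite divr_gt0 // normr_gt0 subr_eq0.
  pose h := t^-1 *: (y - a).
  have [p [sp ep]] := Hline a h.
  have Py : P y = p.[t].
    rewrite -ep /h scalerA mulfV ?gt_eqF // scale1r addrC subrK //.
  have Pa : P a = p.[0] by rewrite -ep scale0r addr0.
  have nh : `|h| = rho.
    rewrite /h normrZ normrV ?unitfE ?gt_eqF // gtr0_norm // /t /g.
    rewrite invfM invrK mulrC mulrA mulfV ?mul1r // normr_eq0 subr_eq0 //.
  rewrite Py Pa (Hls p sp t) (Hls p sp 0) -sumrB.
  apply: le_trans (ler_norm_sum _ _ _) _.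
  rewrite /om mulr_sumr; apply: ler_sum => i _.
  rewrite -mulrBr normrM ler_wpM2r //.
  rewrite -ep; apply: HM.
  rewrite -ball_normE /= opprD addrA subrr add0r normrN normrZ nh normr_nat.
  rewrite /rho mulrA ltr_pdivrMr ?ltr0n // mulrC ltr_pM2l // ltr_nat.
  by apply: (leq_trans (ltn_ord i)).
have Hg : g y @[y --> a] --> (0 : K).
  suff : g y @[y --> a] --> `|a - a| / rho by rewrite subrr normr0 mul0r.
  apply: cvgMr_tmp; apply: cvg_norm; apply: cvgB; first exact: cvg_id.
  exact: cvg_cst.
have Hom : om t @[t --> (0 : K)] --> (0 : K).
  have om00 : om 0 = 0.
    by rewrite /om big1 // => i _; rewrite subrr normr0.
  suff : om t @[t --> (0:K)] --> om 0 by rewrite om00.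
  apply: (@cvg_sumK _ (nbhs (0:K)) _) => i; apply: cvg_norm; apply: cvgB; first exact: horner_cont.
  exact: (@cvg_cstK K 0 _).
have Hf : M * om (g y) @[y --> a] --> (0 : K).
  rewrite -(mulr0 M); apply: cvgMl_tmp; exact: (cvg_comp g om Hg Hom).
apply/cvgrPdist_lt => eps eps0.
move/cvgrPdist_lt: Hf => /(_ eps eps0).
apply: filterS => y; rewrite sub0r normrN => H.
rewrite distrC; apply: le_lt_trans (claim y) _.
by apply: le_lt_trans H; rewrite ger0_norm // mulr_ge0.
Qed.


Hypothesis archK : forall z : K, exists m : nat, `|z| < m%:R.

Lemma compact_bounded_nat (S : set K) : compact S ->
  exists N : nat, forall z, S z -> `|z| < N%:R.
Proof.
rewrite compact_cover => Sco.
have covS : S `<=` \bigcup_(n in [set: nat]) [set z : K | `|z| < n%:R].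
  by move=> z _; have [m hm] := archK z; exists m.
have /Sco [] := covS.
  move=> m _; rewrite openE => p; rewrite /= -subr_gt0 => ltpn.
  apply/nbhs_ballP; exists (m%:R - `|p|) => // q.
  rewrite -ball_normE /= ltrBrDr distrC; apply: le_lt_trans.
  by rewrite -{1}(subrK p q) ler_normD.
move=> D _ DcovS.
exists (\max_(i <- finmap.enum_fset D) i)%N => z /DcovS [m Dm] /= lt.
apply: (lt_le_trans lt); rewrite ler_nat.
exact: (@leq_bigmax_seq _ (finmap.enum_fset D) xpredT (fun i => i) m Dm).
Qed.

Lemma seq_compact (x : nat -> E) (a : E) :
  (forall m, ball a (m.+1%:R^-1) (x m)) ->
  compact ([set a] `|` range x).
Proof.
move=> Hx F PF FA.
have [cl|ncl] := pselect (cluster F a).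
  by exists a; split => //; left.
have [B [C [FB Ca BC]]] : exists B C, [/\ F B, nbhs a C & forall z, B z -> ~ C z].
  apply: contrapT => H; apply: ncl => B C FB Ca.
  apply: contrapT => nm; apply: H; exists B, C; split => // z Bz Cz.
  by apply: nm; exists z.
have [N HN] : exists N : nat, forall m, (N <= m)%N -> C (x m).
  move/nbhs_ballP: Ca => [e /= e0 HC].
  have [N HN] := archK e^-1.
  exists N => m Nm; apply: HC.
  move: (Hx m); rewrite -!ball_normE /= => h; apply: lt_trans h _.
  rewrite -[X in _ < X]invrK ltf_pV2 ?posrE ?ltr0n ?invr_gt0 //.
  rewrite gtr0_norm ?invr_gt0 // in HN.
  apply: lt_le_trans HN _.
  by rewrite ler_nat; exact: leqW.
pose S := x @` `I_N.
have FS : F S.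
  apply: filterS (filterI FA FB) => z [[->|[m _ <-]] Bz].
    by case: (BC a Bz (nbhs_singleton Ca)).
  have [mN|Nm] := ltnP m N; first by exists m.
  by case: (BC _ Bz (HN m Nm)).
have [z [Sz clz]] := finite_compact (finite_image x (finite_II N)) PF FS.
exists z; split => //; right; case: Sz => m _ <-; by exists m.
Qed.

Lemma main_generic (P : E -> K) : is_polynomial P ->
  (continuous P <-> (forall A : set E, compact A -> compact (P @` A))).
Proof.
move=> HP; split.
  move=> cP A cA; apply: continuous_compact => //.
  by apply: continuous_subspaceT => x; exact: cP.
move=> Hc a; have [n Hline] := polynomial_line HP.
have [[r [M [r0 HM]]]|nb] :=
  pselect (exists r M, 0 < r /\ forall y, ball a r y -> `|P y| <= M).
  exact: bounded_cont Hline r0 HM.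
have Hm : forall m : nat, exists y, ball a (m.+1%:R^-1) y /\ m%:R < `|P y|.
  move=> m; apply: contrapT => H; apply: nb; exists m.+1%:R^-1, m%:R.
  split; first by rewrite invr_gt0 ltr0n.
  move=> y By; apply: contrapT => nle; apply: H; exists y; split => //.
  by rewrite real_ltNge ?realn ?normr_real //; apply/negP.
have [x Hx] := choice Hm.
have cA := seq_compact (fun m => proj1 (Hx m)).
have [N HN] := compact_bounded_nat (Hc _ cA).
have h2 := HN (P (x N)) (ex_intro2 _ _ (x N) (or_intror (ex_intro2 _ _ N I erefl)) erefl).
have h1 := proj2 (Hx N).
by have := lt_trans h1 h2; rewrite ltxx.
Qed.

End B.

Lemma generic_thm (K : numFieldType) :
  (forall z : K, exists m : nat, `|z| < m%:R) -> poly_cont_iff_compact_images K.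
Proof. by move=> archK E P HP; exact: (@main_generic K E archK P HP). Qed.

Import archimedean.Num.Def archimedean.Num.Theory.
Lemma archR (R : realType) (z : R) : exists m : nat, `|z| < m%:R.
Proof. by exists (truncn `|z|).+1; rewrite truncnS_gt. Qed.

Lemma archC (R : realType) (z : R[i]) : exists m : nat, `|z| < m%:R.
Proof.
have [m hm] := @archR R (Num.sqrt ((complex.Re z)^+2 + (complex.Im z)^+2)).
exists m; rewrite normc_def -(rmorph_nat (real_complex R)) ltcR.
by apply: le_lt_trans hm; exact: ler_norm.
Qed.

Unset Implicit Arguments.
Theorem theorem2p1 (R : realType) :
  poly_cont_iff_compact_images R /\ poly_cont_iff_compact_images R[i].
Proof.
split; apply: generic_thm; [exact: archR | exact: archC].
Qed.
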